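(* Let $n\ge2$ and $\mathbf b=(b_1,\dots,b_{n-1})\in\mathbb R^{n-1}$ with $\mathbf b\notin\mathcal W^+_n(1,n-1)$. Then the map $\mathbb R\to\mathbb R^n$, $x\mapsto(x,b_1x,\dots,b_{n-1}x)$, is extremal.
   Context: Sup-norms. For a row vector $\mathbf y\in\mathbb R^k$ and $v>0$, $\mathbf y\in\mathcal W_v(1,k)$ if there are infinitely many $\mathbf q\in\mathbb Z^k$ with $|\mathbf y\mathbf q+p|\le\|\mathbf q\|^{-v}$ for some $p\in\mathbb Z$; $\mathcal W^+_v(1,k)=\bigcup_{u>v}\mathcal W_u(1,k)$. $\mathbf y\in\mathbb R^n$ is very well approximable (VWA) if $\mathbf y\in\mathcal W_v(1,n)$ for some $v>n$; a map is extremal if almost every point of its domain is mapped to a non-VWA vector. *)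

(* Defs.v *)
From HB Require Import structures.
From mathcomp Require Import all_boot all_order all_algebra.
From mathcomp Require Import all_classical all_reals all_analysis.
Set Implicit Arguments. Unset Strict Implicit. Unset Printing Implicit Defensive.
Import Order.TTheory GRing.Theory Num.Theory.
Local Open Scope ring_scope.
Local Open Scope classical_set_scope.

Definition supnormZ (R : realType) (k : nat) (q : 'rV[int]_k) : R :=
  \big[Num.max/0]_(i < k) `|(q 0 i)%:~R : R|.

Definition dotZ (R : realType) (k : nat) (y : 'rV[R]_k) (q : 'rV[int]_k) : R :=
  \sum_(i < k) y 0 i * (q 0 i)%:~R.

Definition W_set (R : realType) (k : nat) (v : R) (y : 'rV[R]_k) : Prop :=
  infinite_set [set q : 'rV[int]_k |
     exists p : int, `|dotZ y q + p%:~R| <= (supnormZ R q) `^ (- v)].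

Definition W_plus (R : realType) (k : nat) (v : R) (y : 'rV[R]_k) : Prop :=
  exists2 u : R, v < u & W_set u y.

Definition VWA (R : realType) (k : nat) (y : 'rV[R]_k) : Prop :=
  exists2 v : R, k%:R < v & W_set v y.

Definition extremal (R : realType) (k : nat) (f : R -> 'rV[R]_k) : Prop :=
  {ae (@lebesgue_measure R), forall x, ~ VWA (f x)}.

Definition line_map (R : realType) (m : nat) (b : 'rV[R]_m) (x : R)
  : 'rV[R]_(1 + m) := row_mx (\row_(i < 1) x) (x *: b).

(* Main.v *)
Require Import Defs.
From HB Require Import structures.
From mathcomp Require Import all_boot all_order all_algebra.
From mathcomp Require Import all_classical all_reals all_analysis.
From mathcomp Require Import zify ring lra.
Import Order.TTheory GRing.Theory Num.Theory.
Set Implicit Arguments. Unset Strict Implicit. Unset Printing Implicit Defensive.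
Local Open Scope ring_scope.

Section Basic.
Variable R : realType.

Definition nn (k : nat) (q : 'rV[int]_k) : nat := \max_(i < k) absz (q ord0 i).

Lemma supnormZE k (q : 'rV[int]_k) : supnormZ R q = (nn q)%:R.
Proof.
rewrite /supnormZ /nn.
elim/big_rec2: _ => [//|i a c _ ->].
rewrite -intr_norm /= -[`|q 0 i|%:~R]/((absz (q 0 i))%:R : R).
rewrite /maxn; case: ltnP => h.
  by rewrite max_r // ler_nat ltnW.
by rewrite max_l // ler_nat.
Qed.

Lemma nn_ge k (q : 'rV[int]_k) (i : 'I_k) : (absz (q ord0 i) <= nn q)%N.
Proof. by rewrite /nn; apply: (leq_bigmax i). Qed.

Lemma nn_le k (q : 'rV[int]_k) M :
  (forall i, absz (q ord0 i) <= M)%N -> (nn q <= M)%N.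
Proof. by move=> h; rewrite /nn; apply/bigmax_leqP => i _; apply: h. Qed.

Lemma nn_rsub m (q : 'rV[int]_(1 + m)) : (nn (rsubmx q) <= nn q)%N.
Proof. by apply: nn_le => i; rewrite mxE; apply: nn_ge. Qed.

Lemma nn_split m (q : 'rV[int]_(1 + m)) :
  (nn q <= maxn (absz (q ord0 (lshift m ord0))) (nn (rsubmx q)))%N.
Proof.
apply: nn_le => i; rewrite leq_max.
case: (split_ordP i) => j ->.
  by rewrite (ord1 j) leqnn.
have -> : q ord0 (rshift 1 j) = rsubmx q ord0 j by rewrite mxE.
by rewrite nn_ge orbT.
Qed.

Definition Lf m (b : 'rV[R]_m) (q : 'rV[int]_(1 + m)) : R :=
  (q 0 (lshift m 0))%:~R + dotZ b (rsubmx q).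

Lemma dot_line m (b : 'rV[R]_m) x q :
  dotZ (line_map b x) q = x * Lf b q.
Proof.
rewrite /dotZ /Lf /line_map big_split_ord /= big_ord1 mulrDr mulr_sumr.
congr (_ + _).
  by rewrite row_mxEl mxE.
by apply: eq_bigr => i _; rewrite row_mxEr !mxE mulrA.
Qed.

Definition q_of k M (f : {ffun 'I_k -> 'I_(M.*2.+1)}) : 'rV[int]_k :=
  \row_i ((f i)%:Z - M%:Z).

Lemma box_surj k M (q : 'rV[int]_k) : (nn q <= M)%N ->
  exists f : {ffun 'I_k -> 'I_(M.*2.+1)}, q = q_of f.
Proof.
move=> hq.
exists [ffun i => inord (absz (q ord0 i + M%:Z))].
apply/rowP => i; rewrite /q_of mxE ffunE.
have hi := leq_trans (nn_ge q i) hq.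
have h1 : (0 <= q ord0 i + M%:Z)%R.
  by have := hi; case: (q ord0 i) => [a|a] /=; rewrite ?NegzE; lia.
rewrite inordK.
  by rewrite gez0_abs // addrK.
by move: hi h1; case: (q ord0 i) => [a|a] /=; rewrite ?NegzE; lia.
Qed.

Lemma box_finite k M : finite_set [set q : 'rV[int]_k | (nn q <= M)%N].
Proof.
apply: (@sub_finite_set _ _ [set q_of f | f in [set: {ffun 'I_k -> 'I_(M.*2.+1)}]]).
  by move=> q /= /box_surj [f ->]; exists f.
by apply: finite_image; apply: finite_finset.
Qed.

Lemma exists_nat_gt (c : R) : exists M : nat, c < M%:R.
Proof. by exists (Num.truncn c).+1; apply: truncnS_gt. Qed.

Lemma powR_anti (Q1 Q2 w : R) : 0 < Q1 -> Q1 <= Q2 -> 0 <= w ->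
  Q2 `^ (- w) <= Q1 `^ (- w).
Proof.
move=> h1 h12 w0; rewrite !powRN.
have h2 : 0 < Q2 by apply: lt_le_trans h12.
rewrite lef_pV2 ?posrE ?powR_gt0 //.
by apply: ge0_ler_powR => //; rewrite nnegrE ltW.
Qed.

Lemma powR_small (δ w : R) : 0 < δ -> 0 < w ->
  exists M : nat, forall Q : nat, (M <= Q)%N -> Q%:R `^ (- w) <= δ.
Proof.
move=> d0 w0.
set T := δ^-1 `^ (w^-1).
exists (Num.truncn T).+1 => Q hQ.
have T0 : 0 <= T by apply: powR_ge0.
have TQ : T < Q%:R.
  apply: lt_le_trans (truncnS_gt T) _; by rewrite ler_nat.
have Q0 : 0 < (Q%:R : R) by apply: le_lt_trans TQ.
have -> : δ = (T `^ w)^-1.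
  by rewrite /T -powRrM mulVf ?gt_eqF // powRr1 ?invrK // ltW // invr_gt0.
rewrite powRN lef_pV2 ?posrE ?powR_gt0 // ?invr_gt0 //.
apply: ge0_ler_powR; rewrite ?nnegrE //; try exact: ltW.
all: by rewrite ltW.
Qed.

Lemma dot_bound m (b : 'rV[R]_m) (q : 'rV[int]_m) :
  `|dotZ b q| <= (\sum_i `|b 0 i|) * (nn q)%:R.
Proof.
rewrite /dotZ mulr_suml; apply: le_trans (ler_norm_sum _ _ _) _.
apply: ler_sum => i _; rewrite normrM ler_wpM2l //.
by rewrite -intr_norm -[`|q 0 i|%:~R]/((absz (q 0 i))%:R : R) ler_nat nn_ge.
Qed.

Lemma int_norm_lt1 (p : int) : `|p| < 1 -> p = 0.
Proof. by case: p => [[|a]|a]. Qed.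

Section Key.
Variables (m : nat) (b : 'rV[R]_m) (hb : ~ W_plus (1 + m)%:R b).

Lemma G_bounded u : (1 + m)%:R < u -> exists M1 : nat,
  forall q' : 'rV[int]_m, (M1 < nn q')%N -> forall p : int,
    (nn q')%:R `^ (- u) < `|dotZ b q' + p%:~R|.
Proof.
move=> ku.
have fin : finite_set [set q | exists p : int,
   `|dotZ b q + p%:~R| <= supnormZ R q `^ (- u)].
  by apply: contrapT => hinf; apply: hb; exists u.
have [X hX] := finite_fsetP.1 fin.
exists (\max_(q <- finmap.enum_fset X) nn q) => q' hq' p.
rewrite ltNge; apply/negP => hle.
have : [set q | exists p : int,
   `|dotZ b q + p%:~R| <= supnormZ R q `^ (- u)]%classic q'.
  by exists p; rewrite supnormZE.
rewrite hX /= => qX.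
have := @leq_bigmax_seq _ (finmap.enum_fset X) xpredT (@nn m) q' qX isT.
by rewrite leqNgt hq'.
Qed.


Lemma key v δ N : (1 + m)%:R < v -> 0 < δ -> 0 < N ->
  exists Q0 : nat, forall q : 'rV[int]_(1 + m), (Q0 <= nn q)%N ->
  forall (x : R) (p : int), δ <= `|x| -> `|x| <= N ->
  `|x * Lf b q + p%:~R| <= (nn q)%:R `^ (- v) -> (N *+ 2)^-1 <= `|Lf b q|.
Proof.
move=> kv d0 N0.
set u := ((1 + m)%:R + v) / 2.
have [ku uv] := midf_lt kv.
rewrite -/u in ku uv.
have [M1 hM1] := G_bounded ku.
have [M2 hM2] := @powR_small δ (v - u) d0 (ltac:(by rewrite subr_gt0)).
set B := \sum_i `|b 0 i|.
have B0 : 0 <= B by apply: sumr_ge0 => i _.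
set c := (N *+ 2)^-1.
have c0 : 0 < c by rewrite invr_gt0 mulrn_wgt0.
set M' := maxn M1.+1 (maxn M2 1).
have [Q1 hQ1] := exists_nat_gt (c + (B + 1) * M'%:R).
exists (maxn 2 Q1) => q hq x p hx1 hx2 hr.
rewrite leNgt; apply/negP => hL.
set Q := nn q in hq hr.
set q' := rsubmx q.
set L := Lf b q in hL hr *.
have Q2 : (2 <= Q)%N by apply: leq_trans hq; rewrite leq_maxl.
have QQ1 : (Q1 <= Q)%N by apply: leq_trans hq; rewrite leq_maxr.
have hxL : `|x * L| < 2^-1.
  rewrite normrM; apply: le_lt_trans (ler_wpM2r (normr_ge0 _) hx2) _.
  have -> : (2^-1 : R) = N * c.
    rewrite /c -mulr_natr; field; rewrite gt_eqF //.

  by rewrite ltr_pM2l.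
have hr1 : (Q%:R : R) `^ (- v) <= 2^-1.
  have Q1R : (1 : R) <= Q%:R by rewrite ler1n; apply: leq_trans Q2.
  apply: le_trans (_ : Q%:R `^ (-1) <= _).
    apply: ler_powR => //; rewrite lerN2.
    by apply: le_trans (ltW kv); rewrite ler1n.
  rewrite powR_inv1 ?ler0n // lef_pV2 ?posrE ?ltr0n //; last by apply: leq_trans Q2.
  by rewrite ler_nat.
have p0 : p = 0.
  have : `|p%:~R : R| < 1.
    have -> : (p%:~R : R) = (x * L + p%:~R) - x * L by rewrite addrAC subrr add0r.
    apply: le_lt_trans (ler_normB _ _) _.
    rewrite [X in _ < X](_ : 1 = 2^-1 + 2^-1); last by field.
    by apply: ler_ltD; [apply: le_trans hr hr1 | exact: hxL].
  rewrite -intr_norm -[1]/(1%:~R : R) ltr_int.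
  exact: int_norm_lt1.
move: hr; rewrite p0 addr0 normrM => hr.
have hLr : `|L| <= Q%:R `^ (- v) / δ.
  rewrite ler_pdivlMr //; apply: le_trans hr.
  by rewrite mulrC ler_wpM2r.
set Q' := nn q'.
have hq'Q : (Q' <= Q)%N by apply: nn_rsub.
have eL : L = (q ord0 (lshift m ord0))%:~R + dotZ b q' by [].
have hQ' : (M' <= Q')%N.
  rewrite leqNgt; apply/negP => hlt.
  have hQM : (Q'%:R : R) <= M'%:R by rewrite ler_nat ltnW.
  have hsplit := nn_split q.
  have q0b : ((absz (q ord0 (lshift m ord0)))%:R : R) <= c + B * Q'%:R.
    have -> : ((absz (q ord0 (lshift m ord0)))%:R : R) = `|L - dotZ b q'|.
      by rewrite eL addrK -intr_norm.
    apply: le_trans (ler_normB _ _) _.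
    by apply: lerD; [exact: ltW | exact: dot_bound].
  have hBM : c + B * Q'%:R <= c + (B + 1) * M'%:R.
    rewrite lerD2l mulrDl mul1r.
    apply: le_trans (_ : B * M'%:R <= _); first by rewrite ler_wpM2l.
    by rewrite lerDl.
  have : (Q%:R : R) <= c + (B + 1) * M'%:R.
    move: hsplit; rewrite leq_max => /orP[h|h].
      by apply: le_trans hBM; apply: le_trans q0b; rewrite ler_nat.
    apply: le_trans (_ : (M'%:R : R) <= _).
      by apply: le_trans hQM; rewrite ler_nat.
    rewrite -[X in X <= _]add0r; apply: lerD; first exact: ltW.
    by rewrite ler_peMl // lerDr.
  move=> hQc.
  have : (Q1%:R : R) <= Q%:R by rewrite ler_nat.
  by move=> hQ1Q; have := lt_le_trans hQ1 (le_trans hQ1Q hQc); rewrite ltxx.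
have hM1' : (M1 < Q')%N by apply: leq_trans hQ'; rewrite leq_maxl.
have hM2' : (M2 <= Q')%N.
  by apply: leq_trans hQ'; rewrite /M' (leq_trans _ (leq_maxr _ _)) // leq_maxl.
have hQ'1 : (1 <= Q')%N.
  by apply: leq_trans hQ'; rewrite /M' (leq_trans _ (leq_maxr _ _)) // leq_maxr.
have hG := hM1 q' hM1' (q ord0 (lshift m ord0)).
rewrite addrC -eL in hG.
have : `|L| <= (Q'%:R) `^ (- u).
  apply: le_trans hLr _.
  have Q'pos : (0 : R) < Q'%:R by rewrite ltr0n.
  have v0 : 0 <= v by apply: le_trans (ltW kv).
  rewrite ler_pdivrMr //.
  apply: le_trans (powR_anti Q'pos _ v0) _; first by rewrite ler_nat.
  have -> : (Q'%:R : R) `^ (- v) = Q'%:R `^ (- u) * Q'%:R `^ (- (v - u)).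
    rewrite -powRD; first by congr (_ `^ _); ring.
    by apply/implyP => _; rewrite gt_eqF.
  by apply: ler_wpM2l; [exact: powR_ge0 | exact: hM2].
by rewrite leNgt hG.
Qed.

End Key.

Local Open Scope classical_set_scope.

Lemma mu_bigsetU_le (T : finType) (F : T -> set R) (c : R) :
  (forall i, measurable (F i)) ->
  (forall i, lebesgue_measure (F i) <= c%:E)%E ->
  (lebesgue_measure (\big[setU/set0]_(i : T) F i) <= (#|T|%:R * c)%:E)%E.
Proof.
move=> mF hF; rewrite -big_enum cardE.
elim: (enum T) => [|i s IH] /=.
  by rewrite big_nil measure0 mul0r.
rewrite big_cons.
have mU : measurable (\big[setU/set0]_(j <- s) F j).
  by apply: bigsetU_measurable => j _; apply: mF.
apply: (le_trans (measureU2 lebesgue_measure (mF i) mU)).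
rewrite -addn1 natrD mulrDl mul1r EFinD [X in (_ <= X)%E]addeC.
exact: leeD (hF i) IH.
Qed.

Lemma mem_bigsetU (T : finType) (F : T -> set R) i :
  F i `<=` \big[setU/set0]_(j : T) F j.
Proof.
rewrite -big_enum; have : i \in enum T by rewrite mem_enum.
elim: (enum T) => [//|j s IH] /=.
rewrite inE big_cons => /orP[/eqP ->|/IH h]; first by move=> x; left.
by move=> x /h; right.
Qed.

Section Cover.
Variables (m : nat) (b : 'rV[R]_m) (v N : R).
Hypotheses (v0 : 0 < v) (N0 : 0 < N).

Definition rK (K : nat) : R := ((2 ^ K)%N%:R) `^ (- v).
Definition tq (q : 'rV[int]_(1 + m)) : nat := Num.truncn (N * `|Lf b q|).
Definition Iset K q (i : nat) : set R :=
  closed_ball (- ((i%:Z - (tq q).+1%:Z)%:~R) / Lf b q) (rK K / `|Lf b q|).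
Definition Eset K q : set R :=
  if (N *+ 2)^-1 <= `|Lf b q| then \big[setU/set0]_(i < (tq q).*2.+3) Iset K q i
  else set0.
Definition Dset K : set R :=
  \big[setU/set0]_(f : {ffun 'I_(1 + m) -> 'I_((2 ^ K.+1)%N.*2.+1)})
     Eset K (q_of f).

Lemma rK_gt0 K : 0 < rK K.
Proof. by rewrite /rK powR_gt0 // ltr0n expn_gt0. Qed.

Lemma Dset_measurable K : measurable (Dset K).
Proof.
apply: bigsetU_measurable => f _; rewrite /Eset; case: ifP => // _.
by apply: bigsetU_measurable => i _; apply: measurable_realfun.measurable_closed_ball.
Qed.

Lemma Eset_mu K q : (lebesgue_measure (Eset K q) <= (16 * N * rK K)%:E)%E.
Proof.
rewrite /Eset; case: ifP => hL; last first.
  by rewrite measure0 lee_fin mulr_ge0 ?mulr_ge0 // ltW ?rK_gt0.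
have L0 : 0 < `|Lf b q| by apply: lt_le_trans hL; rewrite invr_gt0 mulrn_wgt0.
apply: le_trans (mu_bigsetU_le (c := rK K / `|Lf b q| *+ 2) _ _) _.
- by move=> i; apply: measurable_realfun.measurable_closed_ball.
- move=> i; rewrite /Iset lebesgue_measure_closed_ball //.
  by rewrite divr_ge0 // ltW ?rK_gt0.
rewrite card_ord lee_fin.
have ht : (tq q)%:R <= N * `|Lf b q|.
  by have /andP[] := truncn_itv (mulr_ge0 (ltW N0) (normr_ge0 (Lf b q))).
have hinv : `|Lf b q|^-1 <= N *+ 2.
  by rewrite -[X in _ <= X]invrK lef_pV2 ?posrE ?invr_gt0 ?mulrn_wgt0.
have r0 := rK_gt0 K.
set L := `|Lf b q| in L0 ht hinv *.
set t := (tq q)%:R in ht.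
have -> : ((tq q).*2.+3)%:R = t *+ 2 + 3 :> R.
  by rewrite /t -addn3 natrD -muln2 natrM mulr_natr.
have e : (t *+ 2 + 3) * (rK K / L *+ 2) = 4 * (t / L) * rK K + 6 * rK K * L^-1.
  by rewrite /t; field; rewrite gt_eqF.
rewrite e.
have h1 : t / L <= N by rewrite ler_pdivrMr // mulrC.
have : 4 * (t / L) * rK K <= 4 * N * rK K.
  by apply: ler_wpM2r; [exact: ltW | apply: ler_wpM2l].
have : 6 * rK K * L^-1 <= 6 * rK K * (N *+ 2).
  by apply: ler_wpM2l => //; apply: mulr_ge0 => //; exact: ltW.
move=> ha hb'; apply: le_trans (lerD hb' ha) _.
rewrite -mulr_natr le_eqVlt; apply/orP; left; apply/eqP; ring.
Qed.

Lemma Eset_measurable K q : measurable (Eset K q).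
Proof.
rewrite /Eset; case: ifP => // _.
by apply: bigsetU_measurable => i _; apply: measurable_realfun.measurable_closed_ball.
Qed.

Definition rho : R := (2 ^ (1 + m))%N%:R * 2 `^ (- v).

Lemma rK_geo K : rK K = (2 `^ (- v)) ^+ K.
Proof.
by rewrite /rK natrX -powR_mulrn // -powRrM mulrC powRrM powR_mulrn //.
Qed.

Lemma Dset_mu K : (lebesgue_measure (Dset K) <=
   ((8 ^ (1 + m))%N%:R * 16 * N * rho ^+ K)%:E)%E.
Proof.
apply: le_trans (mu_bigsetU_le (c := 16 * N * rK K) _ _) _.
- by move=> f; apply: Eset_measurable.
- by move=> f; apply: Eset_mu.
rewrite lee_fin card_ffun !card_ord.
have hc : ((2 ^ K.+1).*2.+1 ^ (1 + m) <= 8 ^ (1 + m) * (2 ^ (1 + m)) ^ K)%N.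
  have -> : ((2 ^ (1 + m)) ^ K = (2 ^ K) ^ (1 + m))%N by rewrite -!expnM mulnC.
  rewrite -expnMn leq_exp2r //.
  rewrite expnS.
  have : (0 < 2 ^ K)%N by rewrite expn_gt0.
  move: (2 ^ K)%N => t ht; rewrite -muln2; lia.
rewrite /rho exprMn rK_geo.
have hN : 0 <= 16 * N * (2 `^ (- v)) ^+ K.
  by rewrite mulr_ge0 ?mulr_ge0 ?exprn_ge0 ?powR_ge0 // ltW.
apply: le_trans (ler_wpM2r hN (_ : _ <= ((8 ^ (1 + m) * (2 ^ (1 + m)) ^ K)%N%:R))) _.
  by rewrite ler_nat.
rewrite natrM (natrX _ (2 ^ (1 + m))%N K) le_eqVlt; apply/orP; left; apply/eqP; ring.
Qed.


Lemma rho_bounds : (1 + m)%:R < v -> 0 < rho < 1.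
Proof.
move=> kv; set k := (1 + m)%:R : R.
have e2 : (2 : R) `^ v = 2 `^ k * 2 `^ (v - k).
  rewrite -powRD; first by congr (_ `^ _); ring.
  by apply/implyP => _.
have g1 : 1 < (2 : R) `^ (v - k).
  rewrite lt_neqAle eq_sym powR_eq1 negb_or negb_or.
  rewrite (_ : (2 : R) == 1 = false) //=; last by apply/negbTE; rewrite gt_eqF // ltr1n.
  rewrite subr_eq0 gt_eqF //= (_ : (2 : R) < 0 = false) //=; last by rewrite ltNge ler0n.
  rewrite -[X in X <= _](powRr0 2); apply: ler_powR; first by rewrite ler1n.
  by rewrite subr_ge0 ltW.
have gk : (2 : R) `^ k = (2 ^ (1 + m))%N%:R by rewrite /k powR_mulrn // natrX.
have p0 : 0 < (2 : R) `^ k by rewrite powR_gt0.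
rewrite /rho -gk powRN e2 invfM mulrA mulfV ?gt_eqF // mul1r.
rewrite invr_gt0 (lt_trans ltr01 g1) /= invf_lt1 //; exact: lt_trans ltr01 g1.
Qed.

Lemma Dset_sum : (1 + m)%:R < v ->
  (\sum_(0 <= K <oo) lebesgue_measure (Dset K) < +oo)%E.
Proof.
move=> kv; have /andP[r0 r1] := rho_bounds kv.
set a := (8 ^ (1 + m))%N%:R * 16 * N.
have a0 : 0 <= a by rewrite mulr_ge0 ?mulr_ge0 // ltW.
apply: (@le_lt_trans _ _ ((a / (1 - rho))%:E)); last exact: ltry.
apply: le_trans (_ : \sum_(0 <= K <oo) ((a * rho ^+ K)%:E) <= _)%E.
  apply: lee_nneseries => [i _ _|K _]; first exact: measure_ge0.
  exact: Dset_mu.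
apply: lime_le.
  apply: is_cvg_nneseries => n _ _; rewrite lee_fin; apply: mulr_ge0 => //; apply: exprn_ge0; exact: ltW.
apply: filterE => n; rewrite sumEFin lee_fin.
have hr : `|rho| < 1 by rewrite ger0_norm // ltW.
have := geometric_le_lim n a0 r0 hr.
by rewrite seriesEnat.
Qed.

End Cover.

Section Final.
Variables (m : nat) (b : 'rV[R]_m) (hb : ~ W_plus (1 + m)%:R b).

Lemma cover v δ N : (1 + m)%:R < v -> 0 < δ -> 0 < N ->
  [set x | (δ <= `|x| <= N) /\ W_set v (line_map b x)] `<=`
  lim_sup_set (Dset b v N).
Proof.
move=> kv d0 N0 x [/andP[hx1 hx2] hW] n0 _.
have v0 : 0 < v by apply: le_lt_trans kv.
have [Q0 hQ0] := key hb kv d0 N0.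
set M := maxn Q0 (2 ^ n0).
have [q [hqS hqM]] : exists q : 'rV[int]_(1 + m), [set q | exists p : int,
     `|dotZ (line_map b x) q + p%:~R| <= supnormZ R q `^ (- v)] q /\
     ~ (nn q <= M)%N.
  apply: contrapT => hno; apply: hW.
  apply: sub_finite_set (box_finite _ M) => q hq /=.
  apply: contrapT => h; apply: hno; exists q; split => //.
have [p hp] := hqS.
rewrite dot_line supnormZE in hp.
move/negP: hqM; rewrite -ltnNge => hqM.
have Qpos : (0 < nn q)%N by apply: leq_ltn_trans hqM.
set K := trunc_log 2 (nn q).
have /andP[hK1 hK2] : (2 ^ K <= nn q < 2 ^ K.+1)%N.
  by have := trunc_log_bounds (isT : (1 < 2)%N) Qpos.
exists K.
  apply: trunc_log_max => //; apply: ltnW; apply: leq_ltn_trans hqM.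
  by rewrite leq_maxr.
have [f hf] := @box_surj _ (2 ^ K.+1) q (ltnW hK2).
rewrite /Dset; apply: (mem_bigsetU (F := fun f => Eset b v N K (q_of f)) (i := f)); rewrite /Eset -hf.
have hL := hQ0 q (leq_trans (leq_maxl _ _) (ltnW hqM)) x p hx1 hx2 hp.
rewrite hL.
set L := Lf b q in hL hp *.
set t := tq b N q.
have L0 : 0 < `|L| by apply: lt_le_trans hL; rewrite invr_gt0 mulrn_wgt0.
have hr1 : (nn q)%:R `^ (- v) <= 1.
  have := @powR_anti 1 (nn q)%:R v ltr01.
  by rewrite powR1; apply; rewrite ?ler1n // ltW.
have hpb : `|p%:~R : R| < (t.+2)%:R.
  have -> : (p%:~R : R) = (x * L + p%:~R) - x * L by rewrite addrAC subrr add0r.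
  apply: le_lt_trans (ler_normB _ _) _.
  rewrite -[t.+2]add1n natrD.
  apply: ler_ltD; first exact: le_trans hr1.
  rewrite normrM; apply: le_lt_trans (ler_wpM2r (normr_ge0 _) hx2) _.
  by rewrite /t /tq -/L truncnS_gt.
rewrite -intr_norm -[(t.+2)%:R]/((t.+2)%:~R : R) ltr_int in hpb.
have [i [hi e]] : exists i, (i < t.*2.+3)%N /\ p = i%:Z - (t.+1)%:Z.
  exists (absz (p + (t.+1)%:Z)).
  move: hpb; clear; move: t p => t p hpb.
  split; lia.
apply: (mem_bigsetU (F := fun i : 'I__ => Iset b v N K q i) (i := Ordinal hi)); rewrite /Iset /= -/t -e.
rewrite closed_ballE; last by rewrite divr_gt0 ?rK_gt0.
rewrite /closed_ball_ /=.
have -> : - p%:~R / L - x = - ((x * L + p%:~R) / L).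
  by field; rewrite -normr_eq0 gt_eqF.
rewrite normrN normrM normfV ler_wpM2r ?invr_ge0 //.
apply: le_trans hp _; rewrite /rK.
apply: powR_anti; [by rewrite ltr0n expn_gt0 | by rewrite ler_nat | exact: ltW].
Qed.


Lemma S_negligible v δ N : (1 + m)%:R < v -> 0 < δ -> 0 < N ->
  lebesgue_measure.-negligible
    [set x | (δ <= `|x| <= N) /\ W_set v (line_map b x)].
Proof.
move=> kv d0 N0; exists (lim_sup_set (Dset b v N)); split.
- apply: bigcap_measurable; try by exists 0%N.
  move=> k _; apply: bigcup_measurable => j _.
  exact: Dset_measurable.
- apply: lim_sup_set_cvg0; first exact: Dset_measurable.
  apply: Dset_sum => //; exact: le_lt_trans kv.
- exact: cover.
Qed.

End Final.

Lemma W_mono k v v' (y : 'rV[R]_k) : 0 < v' -> v' <= v -> W_set v y -> W_set v' y.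
Proof.
move=> v'0 vv hW fin; apply: hW; apply: sub_finite_set fin => q [p hp].
exists p; apply: le_trans hp _; rewrite supnormZE.
have [->|hq] := eqVneq (nn q) 0%N.
  by rewrite !powR0 // oppr_eq0 gt_eqF // (lt_le_trans v'0).
apply: ler_powR; first by rewrite ler1n lt0n.
by rewrite lerN2.
Qed.


Lemma extremal_gen m (b : 'rV[R]_m) (hb : ~ W_plus (1 + m)%:R b) :
  extremal (line_map b).
Proof.
pose S (j : nat) := [set x : R | ((j.+1%:R)^-1 <= `|x| <= j.+1%:R) /\
   W_set ((1 + m)%:R + (j.+1%:R)^-1) (line_map b x)].
suff : lebesgue_measure.-negligible ([set 0] `|` \bigcup_j S j).
  rewrite /extremal; apply: negligibleS => x /= hx.
  have [v kv hW] : VWA (line_map b x) by apply: contrapT.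
  have [->|x0] := eqVneq x 0; first by left.
  right.
  have ax : 0 < `|x| by rewrite normr_gt0.
  have vk : 0 < v - (1 + m)%:R by rewrite subr_gt0.
  have [j hj] := exists_nat_gt (Num.max `|x|^-1 (Num.max `|x| (v - (1 + m)%:R)^-1)).
  rewrite !gt_max in hj; case/and3P: hj => h1 h2 h3.
  have j0 : (0 : R) < j%:R by apply: lt_trans h2.
  have hj1 : (j%:R : R) <= j.+1%:R by rewrite ler_nat.
  exists j => //; split.
    apply/andP; split; last by apply: le_trans hj1; apply: ltW.
    rewrite -[X in _ <= X]invrK lef_pV2 ?posrE ?invr_gt0 ?ltr0n //.
    apply: le_trans hj1; exact: ltW.
  apply: W_mono hW.
    by apply: addr_gt0; rewrite ?invr_gt0 ?ltr0n.
  rewrite -lerBrDl -[X in _ <= X]invrK lef_pV2 ?posrE ?invr_gt0 ?ltr0n //.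
  apply: le_trans hj1; exact: ltW.
apply: negligibleU.
  apply/negligibleP; first exact: measurable_set1.
  exact: lebesgue_measure_set1.
apply: negligible_bigcup => j; apply: S_negligible => //.
- by rewrite ltrDl invr_gt0 ltr0n.
Qed.

End Basic.

Theorem proposition4p7 (R : realType) (n : nat) (hn : (2 <= n)%N)
  (b : 'rV[R]_(n - 1)) (hb : ~ W_plus n%:R b) :
  extremal (line_map b).
Proof.
apply: extremal_gen.
have -> : (1 + (n - 1))%N = n by rewrite addnC subnK // ltnW.
exact: hb.
Qed.
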